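(* For all $d,m\in\mathbb{N}$ there exist $c'=c'(d,m)$ and $d'=d'(d,m)$ such that for every $n\ge m$, every polynomial map $p:\mathbb{R}^n\to\mathbb{R}^m$ with components of degree at most $d$, and every $\Lambda=(\Lambda_1,\dots,\Lambda_m)\in\mathbb{R}^m_+$, the set $C^\Lambda(p)$ is closed and semialgebraic with diagram $D(C^\Lambda(p))=(n,c',d')$.
   Context: $C^\Lambda(p)=\{x\in\mathbb{R}^n:\sigma_i(D_xp)\le\Lambda_i\ \forall i=1,\dots,m\}$, where $\sigma_i(L)=\lambda_i(LL^\top)^{1/2}$ are the singular values (eigenvalues in decreasing order). A set $S\subset\mathbb{R}^n$ is semialgebraic if $S=\bigcup_{i=1}^a\bigcap_{j=1}^{b_i}\{x:\mathrm{sign}(p_{ij}(x))=\sigma_{ij}\}$ for polynomials $p_{ij}$ and $\sigma_{ij}\in\{0,1,-1\}$; ''$D(S)=(n,c',d')$'' means $S$ admits such a representation with $a\cdot\max_ib_i\le c'$ and $\max_{i,j}\deg p_{ij}\le d'$. *)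

(* Defs.v *)
From HB Require Import structures.
From mathcomp Require Import all_boot all_order all_algebra.
From mathcomp Require Import all_classical all_reals all_analysis.
From mathcomp Require mpoly.

Set Implicit Arguments.
Unset Strict Implicit.
Unset Printing Implicit Defensive.

Import Order.TTheory GRing.Theory Num.Theory.
Import numFieldTopology.Exports numFieldNormedType.Exports.
Local Open Scope ring_scope.
Local Open Scope classical_set_scope.

Notation mpol n R := (mpoly.mpoly n R).

Definition mdeg_le (R : realType) (n : nat) (p : mpol n R) (d : nat) : bool :=
  all (fun mm => (mpoly.mdeg mm <= d)%N) (mpoly.msupp p).

Definition peval (R : realType) (n : nat) (p : mpol n R) (x : 'rV[R]_n) : R :=
  mpoly.meval (fun i => x ord0 i) p.

Definition jacobian (R : realType) (n m : nat) (p : 'I_m -> mpol n R)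
  (x : 'rV[R]_n) : 'M[R]_(m, n) :=
  \matrix_(i < m, j < n) peval (mpoly.mderiv j (p i)) x.

Definition eigvals_desc (R : realType) (k : nat) (A : 'M[R]_k) (s : seq R) : Prop :=
  sorted (fun a b : R => b <= a) s /\
  char_poly A = \prod_(a <- s) ('X - a%:P).

Definition eigvals (R : realType) (k : nat) (A : 'M[R]_k) : seq R :=
  xget [::] [set s | eigvals_desc A s].

(* sigma_i(L) = lambda_i(L L^T)^{1/2}  (index i : 'I_m, 0-based) *)
Definition sing_val (R : realType) (m n : nat) (L : 'M[R]_(m, n)) (i : 'I_m) : R :=
  Num.sqrt (nth 0 (eigvals (L *m L^T)) i).

Definition CLambda (R : realType) (n m : nat) (p : 'I_m -> mpol n R)
  (Lam : 'I_m -> R) : set 'rV[R]_n :=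
  [set x | forall i : 'I_m, sing_val (jacobian p x) i <= Lam i].

(* S admits a representation
     S = \bigcup_{i<a} \bigcap_{j<b_i} {x : sign(p_ij(x)) = sigma_ij}
   with a * max_i b_i <= c' and max deg p_ij <= d', i.e. D(S) = (n, c', d'). *)
Definition semialg_diagram (R : realType) (n : nat) (S : set 'rV[R]_n)
  (c' d' : nat) : Prop :=
  exists (a : nat) (b : 'I_a -> nat)
         (P : forall i : 'I_a, 'I_(b i) -> mpol n R)
         (sg : forall i : 'I_a, 'I_(b i) -> R),
    [/\ (a * \max_(i < a) b i <= c')%N,
        (forall i j, mdeg_le (P i j) d'),
        (forall i j, sg i j \in [:: 0; 1; -1]) &
        S = [set x | exists i : 'I_a, forall j : 'I_(b i),
                       Num.sg (peval (P i j) x) = sg i j]].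

(* Main.v *)
Require Import Defs.
From HB Require Import structures.
From mathcomp Require Import all_boot all_order all_algebra.
From mathcomp Require Import all_classical all_reals all_analysis.
From mathcomp Require mpoly.
From mathcomp Require Import polyrcf qe_rcf ordered_qelim complex spectral.
From mathcomp Require Import perm.
Import (canonicals, coercions) mpoly.
Import Order.TTheory GRing.Theory Num.Theory.
Import numFieldTopology.Exports numFieldNormedType.Exports.
Local Open Scope ring_scope.
Local Open Scope classical_set_scope.
Set Implicit Arguments.
Unset Strict Implicit.
Unset Printing Implicit Defensive.
Section Deg.
Variable R : realType.
Variable n : nat.
Implicit Types p q : mpol n R.

Definition dle p D := forall m : mpoly.multinom n, (D < mpoly.mdeg m)%N -> mpoly.mcoeff m p = 0.

Lemma mdeg_leP p D : mdeg_le p D <-> dle p D.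
Proof.
rewrite /mdeg_le /dle; split.
  move=> /allP H m Hm; apply: mpoly.memN_msupp_eq0; apply/negP => /H.
  by rewrite leqNgt Hm.
move=> H; apply/allP => m; rewrite mpoly.mcoeff_msupp => Hm.
by rewrite leqNgt; apply/negP => /H; apply/eqP.
Qed.

Lemma dle_mono p D D' : (D <= D')%N -> dle p D -> dle p D'.
Proof. by move=> le H m Hm; apply: H; apply: leq_ltn_trans Hm. Qed.

Lemma dleC c D : dle (mpoly.mpolyC n c) D.
Proof.
move=> m Hm; rewrite mpoly.mcoeffC; case: eqP => [E|]; last by rewrite mulr0.
by move: Hm; rewrite E mpoly.mdeg0.
Qed.

Lemma dle0 D : dle 0 D.
Proof. by move=> m _; rewrite mpoly.mcoeff0. Qed.

Lemma dleD p q D : dle p D -> dle q D -> dle (p + q) D.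
Proof. by move=> Hp Hq m Hm; rewrite mpoly.mcoeffD Hp // Hq // addr0. Qed.

Lemma dleN p D : dle p D -> dle (- p) D.
Proof. by move=> Hp m Hm; rewrite mpoly.mcoeffN Hp // oppr0. Qed.

Lemma dleMn p D k : dle p D -> dle (p *+ k) D.
Proof. by move=> Hp m Hm; rewrite mpoly.mcoeffMn Hp // mul0rn. Qed.

Lemma dleM p q D E : dle p D -> dle q E -> dle (p * q) (D + E).
Proof.
move=> /mdeg_leP /allP Hp /mdeg_leP /allP Hq; apply/mdeg_leP; apply/allP => m.
move/mpoly.msuppM_le => /allpairsP [[m1 m2] /= [h1 h2 ->]].
by rewrite mpoly.mdegD leq_add // ?Hp ?Hq.
Qed.

Lemma dleX p D k : dle p D -> dle (p ^+ k) (D * k).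
Proof.
move=> Hp; elim: k => [|k IH]; first by rewrite expr0; apply: dleC.
by rewrite exprS mulnS; apply: dleM.
Qed.

Lemma dle_sum (I : Type) (r : seq I) (F : I -> mpol n R) D :
  (forall i, dle (F i) D) -> dle (\sum_(i <- r) F i) D.
Proof.
move=> H; elim: r => [|i r IH]; first by rewrite big_nil; apply: dle0.
by rewrite big_cons; apply: dleD.
Qed.

Lemma dleZ p c D : dle p D -> dle (c *: p) D.
Proof. by move=> Hp m Hm; rewrite mpoly.mcoeffZ Hp // mulr0. Qed.

Lemma dleXm (m0 : mpoly.multinom n) D : (mpoly.mdeg m0 <= D)%N ->
  dle (mpoly.mpolyX R m0) D.
Proof.
move=> H m Hm; rewrite mpoly.mcoeffX; case: eqP => [E|]; last by [].
by move: Hm; rewrite -E ltnNge H.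
Qed.

Lemma dle_sum_in (I : eqType) (r : seq I) (F : I -> mpol n R) D :
  (forall i, i \in r -> dle (F i) D) -> dle (\sum_(i <- r) F i) D.
Proof.
elim: r => [|i r IH] H; first by rewrite big_nil; apply: dle0.
rewrite big_cons; apply: dleD; first by apply: H; rewrite mem_head.
by apply: IH => j Hj; apply: H; rewrite in_cons Hj orbT.
Qed.

Lemma dle_mderiv p i D : dle p D -> dle (mpoly.mderiv i p) D.
Proof.
move=> /mdeg_leP /allP Hp; rewrite /mpoly.mderiv; apply: dle_sum_in => m Hm.
apply: dleZ; apply: dleXm; apply: leq_trans (mpoly.mdegB _ _) _.
exact: Hp.
Qed.
End Deg.
Section Terms.
Variable R : realType.
Local Notation term := (GRing.term R).
Local Notation formula := (ord.formula R).

Definition tsum (s : seq term) : term := foldr (@GRing.Add R) (GRing.NatConst R 0) s.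
Definition tprod (s : seq term) : term := foldr (@GRing.Mul R) (GRing.NatConst R 1) s.
Definition fand (s : seq formula) : formula := foldr (@ord.And R) (ord.Bool true) s.
Definition fforall (l : seq nat) (f : formula) : formula := foldr (@ord.Forall R) f l.

Lemma eval_tsum e s : GRing.eval e (tsum s) = \sum_(t <- s) GRing.eval e t.
Proof. by elim: s => [|t s IH]; rewrite ?big_nil ?big_cons //= IH. Qed.

Lemma eval_tprod e s : GRing.eval e (tprod s) = \prod_(t <- s) GRing.eval e t.
Proof. by elim: s => [|t s IH]; rewrite ?big_nil ?big_cons //= IH. Qed.

Lemma rterm_tsum s : all (@GRing.rterm R) s -> GRing.rterm (tsum s).
Proof. by elim: s => [|t s IH] //= /andP[-> /IH]. Qed.

Lemma rterm_tprod s : all (@GRing.rterm R) s -> GRing.rterm (tprod s).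
Proof. by elim: s => [|t s IH] //= /andP[-> /IH]. Qed.

Lemma holds_fand (T : eqType) e (l : seq T) (F : T -> formula) :
  ord.holds e (fand (map F l)) <-> (forall x, x \in l -> ord.holds e (F x)).
Proof.
elim: l => [|y l IH] /=; first by split.
split.
  move=> [H1 /IH H2] g; rewrite in_cons => /orP[/eqP -> //|]; exact: H2.
move=> H; split; first by apply: H; rewrite mem_head.
by apply/IH => g Hg; apply: H; rewrite in_cons Hg orbT.
Qed.

Lemma rformula_fand s : all (@ord.rformula R) s -> ord.rformula (fand s).
Proof. by elim: s => [|t s IH] //= /andP[-> /IH]. Qed.

Fixpoint upd (e : seq R) (k : nat) (v : seq R) : seq R :=
  match v with [::] => e | x :: v' => upd (set_nth 0 e k x) k.+1 v' end.

Lemma nth_upd e k v i : nth 0 (upd e k v) i =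
  if (k <= i < k + size v)%N then nth 0 v (i - k) else nth 0 e i.
Proof.
elim: v e k => [|x v IH] e k /=.
  by rewrite addn0; case: leqP => // H; rewrite ltnNge H.
rewrite IH nth_set_nth /= addSnnS.
case: (ltngtP k i) => H.
- by have -> : (i - k = (i - k.+1).+1)%N by rewrite subnS prednK // subn_gt0.
- by [].
- by rewrite -H subnn addnS ltnS leq_addr.
Qed.

Lemma holds_fforall e k N f :
  ord.holds e (fforall (iota k N) f) <->
  (forall v : seq R, size v = N -> ord.holds (upd e k v) f).
Proof.
elim: N e k => [|N IH] e k /=.
  split => [H v|H]; first by case: v.
  exact: (H [::]).
split.
  move=> H [|x v] //= [Hs]; exact/(IH _ _).1.
move=> H x; apply/IH => v Hv; apply: (H (x :: v)); by rewrite /= Hv.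
Qed.
End Terms.
Section Formula.
Variable R : realType.
Variable m : nat.
Local Notation term := (GRing.term R).
Local Notation formula := (ord.formula R).

Definition vM (i j : 'I_m) : nat := (i * m + j)%N.
Definition vL (i : nat) : nat := (m * m + i)%N.
Definition vN (i : nat) : nat := (m * m + m + i)%N.
Definition vS : nat := (m * m + m + m)%N.

Definition tA (i j : 'I_m) : term :=
  if i == j then GRing.Add (GRing.Var R vS) (GRing.Opp (GRing.Var R (vM i j)))
  else GRing.Opp (GRing.Var R (vM i j)).

Definition tdet : term :=
  tsum [seq (if odd_perm s then @GRing.Opp R else id)
              (tprod [seq tA i (s i) | i <- index_enum 'I_m]) | s <- index_enum {perm 'I_m}].

Definition tprodN : term :=
  tprod [seq GRing.Add (GRing.Var R vS) (GRing.Opp (GRing.Var R (vN i))) | i <- iota 0 m].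

Fixpoint fsortedl (l : seq nat) : formula :=
  match l with
  | i :: l' => match l' with
               | j :: _ => ord.And (ord.Le (GRing.Var R j) (GRing.Var R i)) (fsortedl l')
               | [::] => ord.Bool true end
  | [::] => ord.Bool true
  end.

Definition fconc : formula :=
  fand [seq ord.Le (GRing.Var R (vN i)) (GRing.Mul (GRing.Var R (vL i)) (GRing.Var R (vL i)))
       | i <- iota 0 m].

Definition Fm : formula :=
  fforall (iota (m * m + m) m)
    (ord.Implies (ord.And (ord.Forall vS (ord.Equal tdet tprodN))
                          (fsortedl (map vN (iota 0 m)))) fconc).

Definition Mof (e : seq R) : 'M[R]_m := \matrix_(i, j) nth 0 e (vM i j).

Definition Psi (M : 'M[R]_m) (L : 'I_m -> R) :=
  forall nu : seq R, size nu = m -> sorted (fun a b => b <= a) nu ->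
    char_poly M = \prod_(a <- nu) ('X - a%:P) -> forall i : 'I_m, nth 0 nu i <= L i * L i.

Lemma vM_lt (i j : 'I_m) : (vM i j < m * m)%N.
Proof.
rewrite /vM; apply: (@leq_trans (i * m + m)); first by rewrite ltn_add2l.
by rewrite -[X in (_ + X)%N]mul1n -mulnDl addn1 leq_mul2r ltn_ord orbT.
Qed.

Lemma rformula_Fm : ord.rformula Fm.
Proof.
rewrite /Fm; elim: (iota _ _) => [|a l IH] //=.
apply/andP; split; [apply/andP; split|].
- apply/andP; split.
    apply: rterm_tsum; rewrite all_map; apply/allP => s _ /=.
    have H : GRing.rterm (tprod [seq tA i (s i) | i <- index_enum 'I_m]).
      apply: rterm_tprod; rewrite all_map; apply/allP => i _ /=.
      by rewrite /tA; case: eqP.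
    by case: odd_perm.
  by apply: rterm_tprod; rewrite all_map; apply/allP => i _.
- elim: (iota 0 m) => [|x l' IH'] //=.
  by case: l' IH' => [|y l''] //=.
- by apply: rformula_fand; rewrite all_map; apply/allP => i _.
Qed.

Lemma poly_eq_horner (p q : {poly R}) : (forall s, p.[s] = q.[s]) -> p = q.
Proof.
move=> H; apply/eqP; rewrite -subr_eq0; apply/negPn/negP => Hn.
have := @max_poly_roots _ (p - q) [seq i%:R | i <- iota 0 (size (p - q))] Hn.
rewrite size_map size_iota ltnn => H'; suff : false by []; apply: H'.
  by apply/allP => x /mapP [i _ ->]; rewrite /root hornerD hornerN H subrr.
rewrite map_inj_uniq ?iota_uniq //; exact: (mulrIn (oner_neq0 R)).
Qed.

Lemma horner_char_poly (M : 'M[R]_m) s : (char_poly M).[s] = \det (s%:M - M).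
Proof.
rewrite /char_poly -[_.[s]]/(horner_eval s _) -det_map_mx; congr (\det _).
apply/matrixP => i j; rewrite !mxE /horner_eval.
by rewrite rmorphB rmorphMn /= horner_evalE hornerX horner_evalE hornerC.
Qed.

Lemma eval_tdet e : GRing.eval e tdet = \det ((nth 0 e vS)%:M - Mof e).
Proof.
rewrite /tdet eval_tsum big_map /determinant; apply: eq_bigr => s _.
have HH : GRing.eval e (tprod [seq tA i (s i) | i <- index_enum 'I_m]) =
          \prod_i ((nth 0 e vS)%:M - Mof e) i (s i).
  rewrite eval_tprod big_map; apply: eq_bigr => i _.
  rewrite /tA !mxE; case: eqP => [->|/eqP H] /=; first by rewrite mulr1n.
  by rewrite mulr0n sub0r.
by case: odd_perm; rewrite /= HH ?expr1 ?expr0 ?mulN1r ?mul1r.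
Qed.

Lemma eval_tprodN e : GRing.eval e tprodN =
  \prod_(i <- iota 0 m) (nth 0 e vS - nth 0 e (vN i)).
Proof. by rewrite /tprodN eval_tprod big_map. Qed.

Lemma holds_fsortedl e l :
  ord.holds e (fsortedl l) <-> sorted (fun a b => b <= a) (map (nth 0 e) l).
Proof.
elim: l => [|i l IH] //=.
case: l IH => [|j l] IH //=.
rewrite IH /=; split; first by move=> [-> ->].
by move=> /andP [-> ->].
Qed.

Lemma holds_Fm e : ord.holds e Fm <-> Psi (Mof e) (fun i => nth 0 e (vL i)).
Proof.
rewrite /Fm holds_fforall /Psi.
have key : forall nu, size nu = m ->
  let e1 := upd e (m * m + m) nu in
  [/\ Mof e1 = Mof e, forall i, (i < m)%N -> nth 0 e1 (vL i) = nth 0 e (vL i),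
      forall i, (i < m)%N -> nth 0 e1 (vN i) = nth 0 nu i &
      forall s, Mof (set_nth 0 e1 vS s) = Mof e].
  move=> nu Hs e1; have HM : Mof e1 = Mof e.
    apply/matrixP => i j; rewrite !mxE /e1 nth_upd.
    by rewrite leqNgt (ltn_addr _ (vM_lt i j)).
  split => //.
  - by move=> i Hi; rewrite /e1 nth_upd /vL leqNgt ltn_add2l Hi.
  - by move=> i Hi; rewrite /e1 nth_upd /vN leq_addr Hs ltn_add2l Hi /= addKn.
  - move=> s; rewrite -HM; apply/matrixP => i j; rewrite !mxE nth_set_nth /=.
    rewrite ifF //; apply/negbTE; rewrite neq_ltn; apply/orP; left.
    by rewrite /vS -addnA ltn_addr // vM_lt.
have Hchar : forall nu, size nu = m ->
  (forall s, GRing.eval (set_nth 0 (upd e (m * m + m) nu) vS s) tdet =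
             GRing.eval (set_nth 0 (upd e (m * m + m) nu) vS s) tprodN) <->
  char_poly (Mof e) = \prod_(a <- nu) ('X - a%:P).
  move=> nu Hs; have [_ _ HN HMs] := key nu Hs.
  have Hp : forall s, GRing.eval (set_nth 0 (upd e (m * m + m) nu) vS s) tprodN =
             (\prod_(a <- nu) ('X - a%:P)).[s].
    move=> s; rewrite eval_tprodN horner_prod.
    rewrite -[in RHS](mkseq_nth 0 nu) Hs /mkseq big_map big_seq [RHS]big_seq.
    apply: eq_bigr => i; rewrite mem_iota add0n => /andP [_ Hi].
    rewrite !nth_set_nth /= eqxx ifF; last first.
      by apply/negbTE; rewrite /vN /vS neq_ltn ltn_add2l Hi.
    by rewrite HN // hornerD hornerN hornerX hornerC.
  split => H.
    apply: poly_eq_horner => s; rewrite horner_char_poly -Hp -H eval_tdet HMs.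
    by rewrite nth_set_nth /= eqxx.
  by move=> s; rewrite Hp -H horner_char_poly eval_tdet HMs nth_set_nth /= eqxx.
split => H nu Hs.
  move=> Hsort Hcp i; have [HM HL HN _] := key nu Hs.
  have Hc : ord.holds (upd e (m * m + m) nu) fconc.
    apply: (H nu Hs); split; first by apply/(Hchar nu Hs).
    apply/holds_fsortedl; rewrite -map_comp.
    suff -> : [seq (nth 0 (upd e (m * m + m) nu) \o vN) i | i <- iota 0 m] = nu by [].
    rewrite -[in RHS](mkseq_nth 0 nu) Hs /mkseq; apply/eq_in_map => j.
    by rewrite mem_iota add0n => /andP [_ Hj] /=; rewrite HN.
  have := (holds_fand _ _ _).1 Hc i.
  rewrite mem_iota ltn_ord /= => /(_ isT) /=.
  by rewrite HN // HL.
move=> /= [Hfa Hso]; apply/holds_fand => i; rewrite mem_iota add0n => /andP [_ Hi] /=.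
have [HM HL HN _] := key nu Hs.
have := H nu Hs _ ((Hchar nu Hs).1 Hfa) (Ordinal Hi) => /=.
rewrite HN // HL //; apply.
move: Hso => /holds_fsortedl; rewrite -map_comp.
suff -> : [seq (nth 0 (upd e (m * m + m) nu) \o vN) i | i <- iota 0 m] = nu by [].
rewrite -[in RHS](mkseq_nth 0 nu) Hs /mkseq; apply/eq_in_map => j.
by rewrite mem_iota add0n => /andP [_ Hj] /=; rewrite HN.
Qed.

End Formula.
Section CL.
Variable R : realType.

Lemma eigvals_desc_uniq k (A : 'M[R]_k) s1 s2 :
  eigvals_desc A s1 -> eigvals_desc A s2 -> s1 = s2.
Proof.
move=> [S1 P1] [S2 P2]; apply: (sorted_eq _ _ S1 S2).
- by move=> a b c H1 H2; apply: le_trans H2 H1.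
- by move=> a b /andP [H1 H2]; apply/le_anti; rewrite H1 H2.
- by apply: prod_XsubC_eq; rewrite -P1 -P2.
Qed.

Lemma eigvals_desc_size k (A : 'M[R]_k) s : eigvals_desc A s -> size s = k.
Proof.
by move=> [_ P]; have := size_char_poly A; rewrite P size_prod_XsubC => -[].
Qed.

Lemma sqrt_le_iff (a L : R) : 0 <= L -> (Num.sqrt a <= L) = (a <= L * L).
Proof.
move=> HL; have [Ha|Ha] := leP a 0.
  rewrite ler0_sqrtr // HL; apply/esym; apply: le_trans Ha _.
  by rewrite mulr_ge0.
have -> : L = Num.sqrt (L * L) by rewrite -expr2 sqrtr_sqr ger0_norm.
rewrite ler_sqrt ?mulr_ge0 //.
by rewrite -expr2 sqrtr_sqr ger0_norm.
Qed.

Lemma CLambda_Psi n m (p : 'I_m -> mpol n R) (Lam : 'I_m -> R) x :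
  (forall i, 0 <= Lam i) ->
  CLambda p Lam x <-> Psi (Defs.jacobian p x *m (Defs.jacobian p x)^T) Lam.
Proof.
move=> HL; set A := Defs.jacobian p x *m _.
rewrite /CLambda /sing_val /= -/A; split.
  move=> H nu Hs Hso Hc i.
  have Hd : eigvals_desc A nu by [].
  have E : eigvals A = nu.
    by apply: xget_unique => // y Hy; apply: eigvals_desc_uniq Hy Hd.
  by rewrite -E -sqrt_le_iff.
move=> H i; rewrite sqrt_le_iff //.
have [[s Hs]|Hn] := pselect (exists s, eigvals_desc A s).
  have Hd : eigvals_desc A (eigvals A).
    by rewrite /eigvals; apply: (@xgetPex _ [::] [set s | eigvals_desc A s]); exists s.
  case: (Hd) => Hso Hc; apply: H => //; exact: eigvals_desc_size Hd.
rewrite /eigvals xgetPN; last by move=> s Hs; apply: Hn; exists s.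
by rewrite nth_nil mulr_ge0.
Qed.
End CL.
Section TPoly.
Variable R : realType.
Variable n : nat.
Local Notation term := (GRing.term R).
Local Notation formula := (ord.formula R).

Fixpoint tpoly (E : nat -> mpol n R) (t : term) : mpol n R :=
  match t with
  | GRing.Var i => E i
  | GRing.Const c => mpoly.mpolyC n c
  | GRing.NatConst k => k%:R
  | GRing.Add a b => tpoly E a + tpoly E b
  | GRing.Opp a => - tpoly E a
  | GRing.NatMul a k => tpoly E a *+ k
  | GRing.Mul a b => tpoly E a * tpoly E b
  | GRing.Inv _ => 0
  | GRing.Exp a k => tpoly E a ^+ k
  end.

Fixpoint tdeg (t : term) : nat :=
  match t with
  | GRing.Var _ => 1
  | GRing.Const _ | GRing.NatConst _ => 0
  | GRing.Add a b => maxn (tdeg a) (tdeg b)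
  | GRing.Opp a => tdeg a
  | GRing.NatMul a _ => tdeg a
  | GRing.Mul a b => tdeg a + tdeg b
  | GRing.Inv _ => 0
  | GRing.Exp a k => tdeg a * k
  end.

Lemma dle_tpoly E D t : (forall i, dle (E i) D) -> dle (tpoly E t) (tdeg t * D).
Proof.
move=> HE; elim: t => /=.
- by move=> i; rewrite mul1n.
- by move=> c; apply: dleC.
- by move=> k; apply: dleMn; rewrite -mpoly.mpolyC1; apply: dleC.
- move=> a Ha b Hb; apply: dleD; apply: dle_mono (Ha) || apply: dle_mono (Hb);
  by rewrite leq_mul2r ?leq_maxl ?leq_maxr orbT.
- by move=> a Ha; apply: dleN.
- by move=> a Ha k; apply: dleMn.
- by move=> a Ha b Hb; rewrite mulnDl; apply: dleM.
- by move=> a _; apply: dle0.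
- by move=> a Ha k; rewrite mulnAC; apply: dleX.
Qed.

Lemma peval_tpoly (Es : seq (mpol n R)) x t : GRing.rterm t ->
  peval (tpoly (nth 0 Es) t) x = GRing.eval [seq peval q x | q <- Es] t.
Proof.
rewrite /peval; elim: t => //=.
- move=> i _; case: (ltnP i (size Es)) => H; first by rewrite (nth_map 0).
  by rewrite !nth_default ?size_map // mpoly.meval0.
- by move=> c _; rewrite mpoly.mevalC.
- by move=> k _; rewrite rmorph_nat.
- by move=> a Ha b Hb /andP [ra rb]; rewrite mpoly.mevalD Ha // Hb.
- by move=> a Ha ra; rewrite mpoly.mevalN Ha.
- by move=> a Ha k ra; rewrite mpoly.mevalMn Ha.
- by move=> a Ha b Hb /andP [ra rb]; rewrite mpoly.mevalM Ha // Hb.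
- by move=> a Ha k ra; rewrite rmorphXn /= Ha.
Qed.

End TPoly.

Section DNF.
Variable R : realType.
Local Notation term := (GRing.term R).
Local Notation formula := (ord.formula R).
Local Notation clause := (seq (term * R)).

Definition tsub (a b : term) : term := GRing.Add a (GRing.Opp b).

Definition and_dnf (A B : seq clause) : seq clause := [seq a ++ b | a <- A, b <- B].

Fixpoint dnf (f : formula) (neg : bool) : seq clause :=
  match f with
  | ord.Bool b => if b (+) neg then [:: [::]] else [::]
  | ord.Equal a b => if neg then [:: [:: (tsub a b, 1)]; [:: (tsub a b, -1)]]
                     else [:: [:: (tsub a b, 0)]]
  | ord.Lt a b => if neg then [:: [:: (tsub a b, 0)]; [:: (tsub a b, 1)]]
                  else [:: [:: (tsub b a, 1)]]
  | ord.Le a b => if neg then [:: [:: (tsub a b, 1)]]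
                  else [:: [:: (tsub b a, 0)]; [:: (tsub b a, 1)]]
  | ord.Unit _ => [::]
  | ord.And f1 f2 => if neg then dnf f1 true ++ dnf f2 true
                     else and_dnf (dnf f1 false) (dnf f2 false)
  | ord.Or f1 f2 => if neg then and_dnf (dnf f1 true) (dnf f2 true)
                    else dnf f1 false ++ dnf f2 false
  | ord.Implies f1 f2 => if neg then and_dnf (dnf f1 false) (dnf f2 true)
                         else dnf f1 true ++ dnf f2 false
  | ord.Not f1 => dnf f1 (~~ neg)
  | ord.Exists _ _ => [::]
  | ord.Forall _ _ => [::]
  end.

Definition csat (e : seq R) (cl : clause) : bool :=
  all (fun ts => Num.sg (GRing.eval e ts.1) == ts.2) cl.

Lemma has_and_dnf e A B :
  has (csat e) (and_dnf A B) = has (csat e) A && has (csat e) B.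
Proof.
elim: A => [|a A IH] //=; rewrite /and_dnf /= has_cat -/(and_dnf A B) IH has_map.
rewrite /preim /=.
have -> : has (fun b => csat e (a ++ b)) B = csat e a && has (csat e) B.
  rewrite /csat; case Ha: (all _ a) => /=.
    by apply: eq_has => b; rewrite all_cat Ha.
  by rewrite (@eq_has _ _ pred0) ?has_pred0 // => b; rewrite all_cat Ha.
by case: (csat e a); case: (has (csat e) A); case: (has (csat e) B).
Qed.

Lemma dnfP e f neg : ord.qf_form f -> ord.rformula f ->
  ord.qf_eval e f (+) neg = has (csat e) (dnf f neg).
Proof.
elim: f neg => //=.
- by move=> b neg _ _; case: (b (+) neg).
- move=> a b [] _ _ /=; rewrite /csat /= !andbT.
    by rewrite addbT orbF !sgr_cp0 subr_gt0 subr_lt0; case: ltgtP.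
  by rewrite addbF orbF sgr_cp0 subr_eq0.
- move=> a b [] _ _ /=; rewrite /csat /= !andbT.
    by rewrite addbT orbF !sgr_cp0 subr_eq0 subr_gt0; case: ltgtP.
  by rewrite addbF orbF sgr_cp0 subr_gt0.
- move=> a b [] _ _ /=; rewrite /csat /= !andbT.
    by rewrite addbT orbF sgr_cp0 subr_gt0 -ltNge.
  by rewrite addbF orbF !sgr_cp0 subr_eq0 subr_gt0; case: ltgtP.
- move=> f1 IH1 f2 IH2 [] /andP [q1 q2] /andP [r1 r2].
    by rewrite has_cat -IH1 // -IH2 //; case: (ord.qf_eval e f1); case: (ord.qf_eval e f2).
  by rewrite has_and_dnf -IH1 // -IH2 //; case: (ord.qf_eval e f1); case: (ord.qf_eval e f2).
- move=> f1 IH1 f2 IH2 [] /andP [q1 q2] /andP [r1 r2].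
    by rewrite has_and_dnf -IH1 // -IH2 //; case: (ord.qf_eval e f1); case: (ord.qf_eval e f2).
  by rewrite has_cat -IH1 // -IH2 //; case: (ord.qf_eval e f1); case: (ord.qf_eval e f2).
- move=> f1 IH1 f2 IH2 [] /andP [q1 q2] /andP [r1 r2].
    by rewrite has_and_dnf -IH1 // -IH2 //; case: (ord.qf_eval e f1); case: (ord.qf_eval e f2).
  by rewrite has_cat -IH1 // -IH2 //; case: (ord.qf_eval e f1); case: (ord.qf_eval e f2).
- move=> f1 IH1 neg q1 r1; rewrite -IH1 //.
  by case: neg; case: (ord.qf_eval e f1).
Qed.

Definition cl_ok (cl : clause) :=
  all (fun ts => GRing.rterm ts.1 && (ts.2 \in [:: 0; 1; -1])) cl.

Lemma and_dnf_ok A B : all cl_ok A -> all cl_ok B -> all cl_ok (and_dnf A B).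
Proof.
move=> HA HB; elim: A HA => [|a A IH] //= /andP [Ha HA].
rewrite /and_dnf /= all_cat -/(and_dnf A B) IH // andbT all_map.
rewrite (@eq_all _ _ cl_ok) // => b /=; rewrite /cl_ok all_cat.
by move: Ha; rewrite /cl_ok => ->.
Qed.

Lemma dnf_ok f neg : ord.rformula f -> all cl_ok (dnf f neg).
Proof.
elim: f neg => //=.
- by move=> b neg _; case: (b (+) neg).
- by move=> a b [] /andP [ra rb] /=; rewrite /cl_ok /= ra rb !inE !eqxx /= ?orbT.
- by move=> a b [] /andP [ra rb] /=; rewrite /cl_ok /= ra rb !inE !eqxx /= ?orbT.
- by move=> a b [] /andP [ra rb] /=; rewrite /cl_ok /= ra rb !inE !eqxx /= ?orbT.
- move=> f1 IH1 f2 IH2 [] /andP [r1 r2];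
    by [rewrite all_cat IH1 // IH2 | apply: and_dnf_ok; [apply: IH1 | apply: IH2]].
- move=> f1 IH1 f2 IH2 [] /andP [r1 r2];
    by [rewrite all_cat IH1 // IH2 | apply: and_dnf_ok; [apply: IH1 | apply: IH2]].
- move=> f1 IH1 f2 IH2 [] /andP [r1 r2];
    by [rewrite all_cat IH1 // IH2 | apply: and_dnf_ok; [apply: IH1 | apply: IH2]].
- by move=> f1 IH1 neg r1; apply: IH1.
Qed.

End DNF.
Section Assemble.
Variable R : realType.
Variables (d m : nat).
Local Notation term := (GRing.term R).

Definition Gm := ord.quantifier_elim (@wproj R) (Fm R m).
Definition Lm := dnf Gm false.
Definition dflt : term * R := (GRing.NatConst R 0, 0).
Definition cbound := (size Lm * \max_(i < size Lm) size (nth [::] Lm i))%N.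
Definition maxdeg := (\max_(i < size Lm) \max_(j < size (nth [::] Lm i))
                        tdeg (nth dflt (nth [::] Lm i) j).1)%N.
Definition dbound := (maxdeg * (d + d))%N.

Lemma Gm_wf : ord.qf_form Gm && ord.rformula Gm.
Proof. exact: (ord.quantifier_elim_wf (@wf_QE_wproj R) (rformula_Fm R m)). Qed.

Lemma GmP e : reflect (ord.holds e (Fm R m)) (ord.qf_eval e Gm).
Proof. exact: (ord.quantifier_elim_rformP (@wf_QE_wproj R) (@valid_QE_wproj R) e (rformula_Fm R m)). Qed.

Lemma Lm_ok : all (@cl_ok R) Lm.
Proof. by apply: dnf_ok; case/andP: Gm_wf. Qed.

Variable n : nat.
Variable p : 'I_m -> mpol n R.
Variable Lam : 'I_m -> R.

Definition pl := [seq p i | i <- enum 'I_m].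
Definition Qnat (a b : nat) : mpol n R :=
  \sum_(k < n) mpoly.mderiv k (nth 0 pl a) * mpoly.mderiv k (nth 0 pl b).
Definition Ll := [seq mpoly.mpolyC n (Lam i) | i <- enum 'I_m].
Definition Efun (k : nat) : mpol n R :=
  if (k < m * m)%N then Qnat (k %/ m) (k %% m) else nth 0 Ll (k - m * m).
Definition Es := mkseq Efun (m * m + m).

Lemma size_pl : size pl = m.
Proof. by rewrite /pl size_map size_enum_ord. Qed.

Lemma size_Ll : size Ll = m.
Proof. by rewrite /Ll size_map size_enum_ord. Qed.

Lemma nth_pl (i : 'I_m) : nth 0 pl i = p i.
Proof. by rewrite /pl (nth_map i) -?enumT ?size_enum_ord // nth_ord_enum. Qed.

Lemma nth_Ll (i : 'I_m) : nth 0 Ll i = mpoly.mpolyC n (Lam i).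
Proof. by rewrite /Ll (nth_map i) -?enumT ?size_enum_ord // nth_ord_enum. Qed.

Lemma dle_Es : (forall i, mdeg_le (p i) d) -> forall k, dle (nth 0 Es k) (d + d).
Proof.
move=> Hp k; rewrite /Es; case: (ltnP k (m * m + m)) => Hk; last first.
  by rewrite nth_default ?size_mkseq //; apply: dle0.
have Hpl : forall a, dle (nth 0 pl a) d.
  move=> a; case: (ltnP a m) => Ha.
    by rewrite -[a]/(nat_of_ord (Ordinal Ha)) nth_pl; apply/mdeg_leP.
  by rewrite nth_default ?size_pl ?size_Ll //; apply: dle0.
rewrite nth_mkseq // /Efun; case: ifP => _.
  by apply: dle_sum => i; apply: dleM; apply: dle_mderiv.
case: (ltnP (k - m * m) m) => Ha.
  rewrite -[(k - m * m)%N]/(nat_of_ord (Ordinal Ha)) nth_Ll; exact: dleC.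
by rewrite nth_default ?size_pl ?size_Ll //; apply: dle0.
Qed.

Definition envx (x : 'rV[R]_n) := [seq peval q x | q <- Es].

Lemma Mof_envx x : Mof m (envx x) = Defs.jacobian p x *m (Defs.jacobian p x)^T.
Proof.
apply/matrixP => i j; rewrite !mxE /envx (nth_map 0); last first.
  by rewrite size_mkseq ltn_addr // vM_lt.
rewrite nth_mkseq; last by rewrite ltn_addr // vM_lt.
have m0 : (0 < m)%N by apply: leq_ltn_trans (ltn_ord i).
rewrite /Efun vM_lt /vM divnMDl // divn_small // addn0 modnMDl modn_small //.
rewrite /Qnat !nth_pl /peval rmorph_sum; apply: eq_bigr => k _.
by rewrite rmorphM !mxE.
Qed.

Lemma Lam_envx x (i : 'I_m) : nth 0 (envx x) (vL m i) = Lam i.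
Proof.
have Hi : (vL m i < m * m + m)%N by rewrite /vL ltn_add2l.
rewrite /envx (nth_map 0) ?size_mkseq // nth_mkseq // /Efun /vL.
rewrite ltnNge leq_addr /= addKn nth_Ll /peval.
exact: mpoly.mevalC.
Qed.

Definition Pij (i : 'I_(size Lm)) (j : 'I_(size (nth [::] Lm i))) : mpol n R :=
  tpoly (nth 0 Es) (nth dflt (nth [::] Lm i) j).1.
Definition sgij (i : 'I_(size Lm)) (j : 'I_(size (nth [::] Lm i))) : R :=
  (nth dflt (nth [::] Lm i) j).2.

Lemma ok_ij (i : 'I_(size Lm)) (j : 'I_(size (nth [::] Lm i))) :
  GRing.rterm (nth dflt (nth [::] Lm i) j).1 &&
  ((nth dflt (nth [::] Lm i) j).2 \in [:: 0; 1; -1]).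
Proof.
have := (all_nthP [::] Lm_ok) i (ltn_ord i).
by move/(all_nthP dflt)/(_ j (ltn_ord j)).
Qed.

Lemma semialg_main : (forall i, mdeg_le (p i) d) -> (forall i, 0 <= Lam i) ->
  semialg_diagram (CLambda p Lam) cbound dbound.
Proof.
move=> Hp HL.
exists (size Lm), (fun i => size (nth [::] Lm i)), Pij, sgij; split.
- by [].
- move=> i j; apply/mdeg_leP; rewrite /Pij /dbound.
  have H := @dle_tpoly R n (nth 0 Es) (d + d) (nth dflt (nth [::] Lm i) j).1 (dle_Es Hp).
  apply: (dle_mono _ H).
  rewrite leq_mul2r; apply/orP; right.
  rewrite /maxdeg; apply: leq_trans _ (leq_bigmax i).
  exact: (leq_bigmax j).
- by move=> i j; have /andP [] := ok_ij j.
apply/seteqP; split => x /=.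
  move=> /(CLambda_Psi _ _ HL).
  rewrite -Mof_envx.
  have -> : Lam = (fun i => nth 0 (envx x) (vL m i)).
    by apply: funext => i; rewrite Lam_envx.
  move/holds_Fm/GmP; rewrite -[ord.qf_eval _ _]addbF dnfP; last 2 first.
  - by case/andP: Gm_wf.
  - by case/andP: Gm_wf.
  move/(has_nthP [::]) => [i Hi Hsat].
  exists (Ordinal Hi) => j; apply/eqP.
  have /andP [rt _] := ok_ij j.
  move/(all_nthP dflt): Hsat => /(_ j (ltn_ord j)) /=.
  by rewrite /Pij /sgij peval_tpoly.
move=> [i Hi]; apply/(CLambda_Psi _ _ HL).
rewrite -Mof_envx.
have -> : Lam = (fun i => nth 0 (envx x) (vL m i)).
  by apply: funext => k; rewrite Lam_envx.
apply/holds_Fm/GmP; rewrite -[ord.qf_eval _ _]addbF dnfP; last 2 first.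
- by case/andP: Gm_wf.
- by case/andP: Gm_wf.
apply/(has_nthP [::]); exists i; first exact: ltn_ord.
apply/(all_nthP dflt) => j Hj.
have /andP [rt _] := ok_ij (Ordinal Hj).
have := Hi (Ordinal Hj); rewrite /Pij /sgij /= peval_tpoly // => ->.
by rewrite eqxx.
Qed.

End Assemble.
Section Spec.
Variable R : realType.
Local Open Scope complex_scope.

Lemma char_poly_similar (F : comUnitRingType) k (P D : 'M[F]_k) :
  P \in unitmx -> char_poly (invmx P *m D *m P) = char_poly D.
Proof.
move=> HP; rewrite /char_poly /char_poly_mx.
set Pp := map_mx polyC P; set Pi := map_mx polyC (invmx P).
have HPi : Pi *m Pp = 1%:M by rewrite -map_mxM mulVmx // map_mx1.
have -> : 'X%:M - map_mx polyC (invmx P *m D *m P) =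
          Pi *m ('X%:M - map_mx polyC D) *m Pp.
  rewrite !map_mxM -/Pp -/Pi mulmxBr mulmxBl mul_mx_scalar -scalemxAl HPi.
  by rewrite scalemx1.
by rewrite !det_mulmx mulrAC -det_mulmx HPi det1 mul1r.
Qed.

Lemma real_complex_Re (z : R[i]) : z \is Num.real -> z = (complex.Re z)%:C.
Proof.
case: z => a b; rewrite realE !lecE /= => H.
suff -> : b = 0 by [].
by case/orP: H => /andP [/eqP H _] //; rewrite H.
Qed.

Lemma sym_split k (A : 'M[R]_k) : A^T = A -> exists nu : seq R,
  [/\ size nu = k, sorted (fun a b => b <= a) nu &
      char_poly A = \prod_(a <- nu) ('X - a%:P)].
Proof.
move=> Hs.
pose f := real_complex R.
pose Ac := map_mx f A.
have Hh : Ac \is hermsymmx.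
  apply: realsym_hermsym.
    by apply/is_hermitianmxP; rewrite expr0 scale1r map_mx_id // map_trmx Hs.
  apply/mxOverP => i j; rewrite mxE realE ler0c.
  by rewrite -[0 : R[i]]/((0 : R)%:C) lecR le_total.
have /orthomx_spectralP HA := hermitian_normalmx Hh.
have Hreal := hermitian_spectral_diag_real Hh.
set P := spectralmx Ac in HA; set sp := spectral_diag Ac in HA Hreal.
pose nu0 := [seq complex.Re (sp ord0 i) | i <- enum 'I_k].
have Hc : char_poly A = \prod_(a <- nu0) ('X - a%:P).
  apply: (@map_poly_inj _ _ f).
  rewrite map_char_poly -/Ac HA char_poly_similar ?spectral_unit //.
  rewrite char_poly_trig ?diag_mx_is_trig // rmorph_prod /= big_map big_enum /=.
  apply: eq_bigr => i _; rewrite map_polyXsubC mxE eqxx mulr1n.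
  have E : sp 0 i = (complex.Re (sp ord0 i))%:C.
    by apply: real_complex_Re; apply: (mxOverP Hreal).
  by rewrite E.
exists (sort (fun a b => b <= a) nu0); split.
- by rewrite size_sort size_map size_enum_ord.
- by apply: sort_sorted => a b; exact: le_total.
- by rewrite Hc; apply: perm_big; rewrite perm_sym perm_sort.
Qed.

End Spec.
Section Cont.
Variable R : realType.

Lemma cont_add (T : topologicalType) (f g : T -> R) :
  continuous f -> continuous g -> continuous (fun t => f t + g t).
Proof. by move=> hf hg x; apply: cvgD; [apply: hf | apply: hg]. Qed.

Lemma cont_mul (T : topologicalType) (f g : T -> R) :
  continuous f -> continuous g -> continuous (fun t => f t * g t).
Proof. by move=> hf hg x; apply: cvgM; [apply: hf | apply: hg]. Qed.

Lemma cont_opp (T : topologicalType) (f : T -> R) :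
  continuous f -> continuous (fun t => - f t).
Proof. by move=> hf x; apply: cvgN; apply: hf. Qed.

Lemma cont_cst (T : topologicalType) (c : R) : continuous (fun _ : T => c).
Proof. by move=> x; apply: cvg_cst. Qed.

Lemma cont_sum (T : topologicalType) (I : Type) (r : seq I) (F : I -> T -> R) :
  (forall i, continuous (F i)) -> continuous (fun t => \sum_(i <- r) F i t).
Proof.
move=> H; elim: r => [|a r IH].
  by under eq_fun do rewrite big_nil; apply: cont_cst.
by under eq_fun do rewrite big_cons; apply: cont_add.
Qed.

Lemma cont_prod (T : topologicalType) (I : Type) (r : seq I) (F : I -> T -> R) :
  (forall i, continuous (F i)) -> continuous (fun t => \prod_(i <- r) F i t).
Proof.
move=> H; elim: r => [|a r IH].
  by under eq_fun do rewrite big_nil; apply: cont_cst.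
by under eq_fun do rewrite big_cons; apply: cont_mul.
Qed.

Lemma cont_exp (T : topologicalType) (f : T -> R) k :
  continuous f -> continuous (fun t => f t ^+ k).
Proof.
move=> H; elim: k => [|k IH].
  by under eq_fun do rewrite expr0; apply: cont_cst.
by under eq_fun do rewrite exprS; apply: cont_mul.
Qed.

Lemma cont_peval (T : topologicalType) n (q : mpol n R) (g : T -> 'rV[R]_n) :
  (forall k, continuous (fun t => g t ord0 k)) -> continuous (fun t => peval q (g t)).
Proof.
move=> Hg; rewrite /peval.
under eq_fun do rewrite mpoly.mevalE.
apply: cont_sum => mm; apply: cont_mul; first exact: cont_cst.
apply: cont_prod => i; apply: cont_exp.
exact: Hg.
Qed.

Lemma cont_det (T : topologicalType) k (A : T -> 'M[R]_k) :
  (forall i j, continuous (fun t => A t i j)) -> continuous (fun t => \det (A t)).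
Proof.
move=> H; rewrite /determinant; apply: cont_sum => s; apply: cont_mul.
  exact: cont_cst.
by apply: cont_prod => i; apply: H.
Qed.

End Cont.

Section PSD.
Variable R : realType.

Lemma psd_roots n m (J : 'M[R]_(m, n)) (nu : seq R) :
  char_poly (J *m J^T) = \prod_(a <- nu) ('X - a%:P) -> forall a, a \in nu -> 0 <= a.
Proof.
move=> Hc a Ha.
have : eigenvalue (J *m J^T) a.
  by rewrite eigenvalue_root_char Hc root_prod_XsubC.
move=> /eigenvalueP [v Hv vn0].
have E : (v *m J) *m (v *m J)^T = a *: (v *m v^T).
  by rewrite trmx_mul mulmxA -(mulmxA v) Hv -scalemxAl.
have H1 : 0 <= ((v *m J) *m (v *m J)^T) ord0 ord0.
  by rewrite mxE; apply: sumr_ge0 => i _; rewrite [X in _ * X]mxE -expr2 sqr_ge0.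
have H2 : 0 < (v *m v^T) ord0 ord0.
  rewrite mxE (eq_bigr (fun k => v ord0 k ^+ 2)); last by move=> k _; rewrite mxE expr2.
  rewrite lt_def sumr_ge0 ?andbT; last by move=> k _; rewrite sqr_ge0.
  apply/negP => /eqP H0; apply: (negP vn0); apply/eqP/matrixP => i j.
  rewrite ord1 mxE.
  have := psumr_eq0P (fun k _ => sqr_ge0 (v ord0 k)) H0 (i := j) isT.
  by move/eqP; rewrite sqrf_eq0 => /eqP.
move: H1; rewrite E mxE => H1.
by rewrite -(pmulr_lge0 _ H2).
Qed.

End PSD.
Section Closed.
Variable R : realType.
Variables (n m : nat).
Variable p : 'I_m -> mpol n R.
Variable Lam : 'I_m -> R.
Hypothesis HL : forall i, 0 <= Lam i.

Definition Mx (y : 'rV[R]_n) : 'M[R]_m := Defs.jacobian p y *m (Defs.jacobian p y)^T.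

Lemma Mx_sym y : (Mx y)^T = Mx y.
Proof. by rewrite /Mx trmx_mul trmxK. Qed.

Lemma cont_Mx (T : topologicalType) (g : T -> 'rV[R]_n) :
  (forall k, continuous (fun t => g t ord0 k)) ->
  forall i j, continuous (fun t => Mx (g t) i j).
Proof.
move=> Hg i j; rewrite /Mx /Defs.jacobian.
under eq_fun do rewrite mxE.
apply: cont_sum => k; under eq_fun do rewrite !mxE.
by apply: cont_mul; apply: cont_peval.
Qed.

Lemma cont_lsub : continuous (fun z : 'rV[R]_(n + m) => lsubmx z).
Proof.
move=> z s /= /(nbhs_ballP (lsubmx z)) [e e0 es].
apply/nbhs_ballP; exists e => // z' [_ H]; apply/es; split => // i j.
by rewrite !mxE; apply: H.
Qed.

Lemma cont_lsub_coord k : continuous (fun z : 'rV[R]_(n + m) => lsubmx z ord0 k).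
Proof.
under eq_fun do rewrite mxE.
exact: (@coord_continuous R 1 (n + m) ord0 (lshift m k)).
Qed.

Lemma cont_rsub_coord k : continuous (fun z : 'rV[R]_(n + m) => rsubmx z ord0 k).
Proof.
under eq_fun do rewrite mxE.
exact: (@coord_continuous R 1 (n + m) ord0 (rshift n k)).
Qed.

Lemma closed_forall0 (T : topologicalType) (I : Type) (f : I -> T -> R) :
  (forall i, continuous (f i)) -> closed [set t | forall i, f i t = 0].
Proof.
move=> H.
have -> : [set t | forall i, f i t = 0] = \bigcap_(i in setT) (f i @^-1` [set 0]).
  apply/seteqP; split => t /= Ht.
    by move=> i _; apply: Ht.
  by move=> i; apply: Ht.
apply: closed_bigI => i _; apply: preimage_closed; last exact: closed_eq.
by move=> t _; apply: H.
Qed.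

Lemma closed_forall_le (T : topologicalType) (I : Type) (f : I -> T -> R) :
  (forall i, continuous (f i)) -> closed [set t | forall i, f i t <= 0].
Proof.
move=> H.
have -> : [set t | forall i, f i t <= 0] = \bigcap_(i in setT) (f i @^-1` [set r | r <= 0]).
  apply/seteqP; split => t /= Ht.
    by move=> i _; apply: Ht.
  by move=> i; apply: Ht.
apply: closed_bigI => i _; apply: preimage_closed; last exact: closed_le.
by move=> t _; apply: H.
Qed.

Definition F1 (s : R) (z : 'rV[R]_(n + m)) : R :=
  \det (s%:M - Mx (lsubmx z)) - \prod_(i < m) (s - rsubmx z ord0 i).
Definition F2 (ij : 'I_m * 'I_m) (z : 'rV[R]_(n + m)) : R :=
  if (ij.1 <= ij.2)%N then rsubmx z ord0 ij.2 - rsubmx z ord0 ij.1 else 0.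
Definition F3 (i : 'I_m) (z : 'rV[R]_(n + m)) : R := rsubmx z ord0 i - Lam i * Lam i.

Definition Zset : set 'rV[R]_(n + m) :=
  [set z | forall s, F1 s z = 0] `&` [set z | forall ij, F2 ij z <= 0]
  `&` [set z | forall i, F3 i z <= 0].

Lemma closed_Zset : closed Zset.
Proof.
apply: closedI; first apply: closedI.
- apply: closed_forall0 => s; rewrite /F1; apply: cont_add; last first.
    apply: cont_opp; apply: cont_prod => i; apply: cont_add; first exact: cont_cst.
    by apply: cont_opp; apply: cont_rsub_coord.
  apply: cont_det => i j; under eq_fun do rewrite !mxE.
  apply: cont_add; first exact: cont_cst.
  apply: cont_opp; apply: cont_sum => k; rewrite /Defs.jacobian.
  under eq_fun do rewrite !mxE.
  by apply: cont_mul; apply: cont_peval => l; apply: cont_lsub_coord.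
- apply: closed_forall_le => -[i j]; rewrite /F2 /=.
  case: (nat_of_ord i <= j)%N; last exact: cont_cst.
  by apply: cont_add; [|apply: cont_opp]; apply: cont_rsub_coord.
- apply: closed_forall_le => i; rewrite /F3.
  by apply: cont_add; [apply: cont_rsub_coord | apply: cont_cst].
Qed.

End Closed.
Section Closed2.
Variable R : realType.
Variables (n m : nat).
Variable p : 'I_m -> mpol n R.
Variable Lam : 'I_m -> R.
Hypothesis HL : forall i, 0 <= Lam i.

Lemma prod_nth (nu : seq R) k (F : R -> R) : size nu = k ->
  \prod_(a <- nu) F a = \prod_(i < k) F (nth 0 nu i).
Proof.
move=> Hs; rewrite -[in LHS](mkseq_nth 0 nu) Hs /mkseq big_map.
by rewrite -(big_mkord xpredT (fun i => F (nth 0 nu i))) /index_iota subn0.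
Qed.

Lemma nth_enum_map (f : 'I_m -> R) k (Hk : (k < m)%N) :
  nth 0 [seq f j | j <- enum 'I_m] k = f (Ordinal Hk).
Proof.
rewrite (nth_map (Ordinal Hk)) ?size_enum_ord //; congr f; apply: val_inj.
by rewrite /= nth_enum_ord.
Qed.

Definition Tb := \sum_i Lam i * Lam i.
Definition Abox (x : 'rV[R]_n) (i : 'I_(n + m)) : set R :=
  match fintype.split i with
  | inl k => `[x ord0 k - 1, x ord0 k + 1]%classic
  | inr _ => `[0, Tb]%classic
  end.
Definition Box x := [set v : 'rV[R]_(n + m) | forall i, Abox x i (v ord0 i)].

Lemma compact_Box x : compact (Box x).
Proof.
apply: (@rV_compact _ _ (Abox x)) => i; rewrite /Abox; case: (fintype.split i) => k; exact: segment_compact.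
Qed.

Lemma closed_CLambda : closed (CLambda p Lam).
Proof.
move=> x Hx.
pose S := Box x `&` Zset p Lam.
have cS : compact S.
  by apply: compact_closedI; [exact: compact_Box | exact: closed_Zset].
pose P := (fun z : 'rV[R]_(n + m) => lsubmx z) @` S.
have cP : compact P.
  by apply: continuous_compact cS; apply: continuous_subspaceT; exact: cont_lsub.
have clP : closed P.
  by apply: compact_closed cP; exact: norm_hausdorff.
have sub1 : P `<=` CLambda p Lam.
  move=> _ [z [Bz [[Z1 Z2] Z3]] <-].
  apply/(CLambda_Psi _ _ HL) => nu' Hs Hso Hc i.
  pose nu := [seq rsubmx z ord0 j | j <- enum 'I_m].
  have Hnu : eigvals_desc (Mx p (lsubmx z)) nu.
    split.
      apply/(sortedP 0) => k; rewrite size_map size_enum_ord => Hk.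
      have Hk' : (k < m)%N by apply: ltn_trans Hk.
      rewrite (nth_enum_map _ Hk) (nth_enum_map _ Hk').
      have := Z2 (Ordinal Hk', Ordinal Hk); rewrite /F2 /= leqnSn subr_le0.
      by [].
    apply: poly_eq_horner => s; rewrite horner_char_poly horner_prod big_map big_enum /=.
    have := Z1 s; rewrite /F1 => /eqP; rewrite subr_eq0 => /eqP ->.
    by apply: eq_bigr => j _; rewrite hornerXsubC.
  have E : nu' = nu by apply: (eigvals_desc_uniq (conj Hso Hc) Hnu).
  rewrite E (nth_enum_map _ (ltn_ord i)).
  have := Z3 i; rewrite /F3 subr_le0.
  by have -> : Ordinal (ltn_ord i) = i by apply: val_inj.
have sub2 : forall y, CLambda p Lam y -> ball x 1 y -> P y.
  move=> y Cy bxy.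
  have [nu [Hs Hso Hc]] := sym_split (Mx_sym p y).
  have Hpsi := (CLambda_Psi _ _ HL).1 Cy nu Hs Hso Hc.
  have Hge0 := psd_roots Hc.
  pose w : 'rV[R]_m := \row_j nth 0 nu j.
  exists (row_mx y w); last exact: row_mxKl.
  split.
    move=> i; rewrite /Abox mxE; case: (fintype.split i) => k /=.
      move: bxy => [_ /(_ ord0 k)]; rewrite /ball /= => H.
      rewrite in_itv /=; move: H; rewrite ltr_distlC => /andP [H1 H2].
      by rewrite !ltW.
    rewrite in_itv /= mxE; apply/andP; split.
      by apply: Hge0; apply: mem_nth; rewrite Hs.
    apply: le_trans (Hpsi k) _; rewrite /Tb (bigD1 k) //= lerDl.
    by apply: sumr_ge0 => j _; rewrite mulr_ge0.
  split; first split.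
  - move=> s; rewrite /F1 row_mxKl row_mxKr; apply/eqP; rewrite subr_eq0; apply/eqP.
    rewrite -horner_char_poly /Mx Hc horner_prod (prod_nth _ Hs).
    by apply: eq_bigr => j _; rewrite hornerXsubC mxE.
  - move=> [i j]; rewrite /F2 /= row_mxKr; case: ifP => Hij //.
    rewrite !mxE subr_le0.
    have := sorted_leq_nth (leT := fun a b : R => b <= a) _ _ 0 Hso.
    apply => //; last by rewrite inE Hs.
    + by move=> a b c H1 H2; apply: le_trans H2 H1.
    + by rewrite inE Hs.
  - by move=> i; rewrite /F3 row_mxKr mxE subr_le0; apply: Hpsi.
apply: sub1; apply: clP => B HB.
have HB' : nbhs x (B `&` ball x 1) by apply: filterI => //; apply: nbhsx_ballx.
have [y [Cy [By bxy]]] := Hx _ HB'.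
by exists y; split => //; apply: sub2.
Qed.

End Closed2.

Theorem proposition3p16 (R : realType) :
  forall d m : nat, exists c' d' : nat,
    forall (n : nat), (m <= n)%N ->
    forall (p : 'I_m -> mpol n R), (forall i, mdeg_le (p i) d) ->
    forall (Lam : 'I_m -> R), (forall i, 0 <= Lam i) ->
      closed (CLambda p Lam : set 'rV[R]_n) /\ semialg_diagram (CLambda p Lam) c' d'.
Proof.
move=> d m; exists (cbound R m), (dbound R d m) => n _ p Hp Lam HL; split.
- exact: closed_CLambda.
- exact: semialg_main.
Qed.
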